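(* Let $\mathcal G=\langle V=V_{\mathrm{Min}}\uplus V_{\mathrm{Max}}, V_T, A, E, \omega\rangle$ be a finite weighted game and $c\colon V_T\to\mathbb Z$. Assume that the subgraph induced by $V\setminus V_T$ is strongly connected, that every cycle all of whose vertices lie in $V\setminus V_T$ has positive weight, and that no vertex has value $+\infty$ (with respect to $c$). Let $n=|V\setminus V_T|$. Define $\vec x^0$ by $\vec x^0_v=c(v)$ for $v\in V_T$ and $\vec x^0_v=+\infty$ for $v\in V\setminus V_T$, and $\vec x^i=F(\vec x^{i-1})$ for $i>0$. Then $\vec x^{n+k}=\vec x^n$ for all $k\ge 0$.
   Context: A weighted game has vertices $V$ partitioned into vertices of Min and of Max, targets $V_T\subseteq V_{\mathrm{Min}}$, alphabet $A$, edges $E\subseteq V\times A\times V$, weights $\omega\colon E\to\mathbb Z$, and is deadlock-free (every vertex has an outgoing edge) and deterministic (for each $(v,a)$ at most one $v'$ with $(v,a,v')\in E$). A cycle is a finite sequence of consecutive edges starting and ending at the same vertex (length $\ge1$); its weight is the sum of its edge weights. Strategies, outcomes and values: a strategy of a player chooses, after each finite play ending in one of its vertices, a letter of an outgoing edge; with target values $c\colon V_T\to\mathbb Z$, the weight of a play is $+\infty$ if it never visits $V_T$, and otherwise the sum of the weights of its edges up to the first visit of some $t\in V_T$ plus $c(t)$; the value of $v$ is $\inf_{\sigma_{\mathrm{Min}}}\sup_{\sigma_{\mathrm{Max}}}$ (equal to $\sup_{\sigma_{\mathrm{Max}}}\inf_{\sigma_{\mathrm{Min}}}$) of the weight of the outcome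 from $v$. The operator $F\colon(\mathbb Z\cup\{-\infty,+\infty\})^V\to(\mathbb Z\cup\{-\infty,+\infty\})^V$ is defined by $F(\vec x)_v=c(v)$ if $v\in V_T$, $F(\vec x)_v=\min_{e=(v,a,v')\in E}\omega(e)+\vec x_{v'}$ if $v\in V_{\mathrm{Min}}\setminus V_T$, and $F(\vec x)_v=\max_{e=(v,a,v')\in E}\omega(e)+\vec x_{v'}$ if $v\in V_{\mathrm{Max}}$. *)

(* Defs.v *)
From HB Require Import structures.
From mathcomp Require Import all_boot all_order all_algebra.
From mathcomp Require Import boolp classical_sets constructive_ereal ereal.
Set Implicit Arguments. Unset Strict Implicit. Unset Printing Implicit Defensive.
Import Order.TTheory GRing.Theory Num.Theory.
Local Open Scope ring_scope.
Local Open Scope ereal_scope.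

(* A finite weighted game: vertex type V (finite), alphabet A (finite),
   Min vertices VMin (Max vertices are the complement), targets VT,
   edges E : {set V * A * V}, weights omega : V * A * V -> int
   (only its values on E matter). Edge e = (v, a, v'): e.1.1 = v,
   e.1.2 = a, e.2 = v'. *)

Section Game.
Variables (V A : finType) (VMin VT : {set V}) (E : {set V * A * V})
          (omega : V * A * V -> int).

Definition edge := (V * A * V)%type.

Definition deadlock_free : Prop := forall v : V, exists a v', (v, a, v') \in E.

Definition deterministic : Prop :=
  forall (v : V) (a : A) (v1 v2 : V), (v, a, v1) \in E -> (v, a, v2) \in E -> v1 = v2.

Fixpoint is_hist (u : V) (es : seq edge) : bool :=
  if es is e :: es' then [&& e \in E, e.1.1 == u & is_hist e.2 es'] else true.

Definition hlast (u : V) (es : seq edge) : V := last u [seq e.2 | e <- es].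

Definition is_cycle (u : V) (es : seq edge) : bool :=
  [&& es != [::], is_hist u es & hlast u es == u].

Definition cycle_weight (es : seq edge) : int := \sum_(e <- es) omega e.

Definition induced_edge (S : {set V}) : rel V :=
  fun u w => [&& u \in S, w \in S & [exists a, (u, a, w) \in E]].

Definition strongly_connected_induced (S : {set V}) : Prop :=
  forall u w, u \in S -> w \in S -> connect (induced_edge S) u w.

(* Strategies: after a finite play (start vertex, sequence of edges)
   choose a letter. *)
Definition strategy := V -> seq edge -> A.

Definition valid_strategy (P : {set V}) (s : strategy) : Prop :=
  forall v0 es, is_hist v0 es -> hlast v0 es \in P ->
    exists v', (hlast v0 es, s v0 es, v') \in E.

Definition valid_Min (s : strategy) := valid_strategy VMin s.
Definition valid_Max (s : strategy) := valid_strategy (~: VMin) s.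

Definition outcome (sMin sMax : strategy) (v : V) (rho : nat -> edge) : Prop :=
  [/\ (rho 0%N).1.1 = v,
      forall i, rho i \in E,
      forall i, (rho i).2 = (rho i.+1).1.1 &
      forall i, (rho i).1.2 =
        (if (rho i).1.1 \in VMin then sMin else sMax) v [seq rho j | j <- iota 0 i]].

Variable c : V -> int. (* target values, only used on VT *)

Definition play_weight (rho : nat -> edge) : \bar rat :=
  match pselect (exists i, (rho i).1.1 \in VT) with
  | left H =>
      let i := ex_minn H in
      (((\sum_(j < i) omega (rho j) + c (rho i).1.1)%R)%:~R)%:E
  | right _ => +oo
  end.

Definition game_value (v : V) : \bar rat :=
  ereal_inf [set ereal_sup [set play_weight rho | rho in
                  [set rho | exists sMax, valid_Max sMax /\ outcome sMin sMax v rho]]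
            | sMin in valid_Min].

Definition Fop (x : V -> \bar int) (v : V) : \bar int :=
  if v \in VT then (c v)%:E
  else if v \in VMin then
    \big[Order.min/+oo]_(e in E | e.1.1 == v) ((omega e)%:E + x e.2)
  else
    \big[Order.max/-oo]_(e in E | e.1.1 == v) ((omega e)%:E + x e.2).

Definition x0 (v : V) : \bar int := if v \in VT then (c v)%:E else +oo.

Definition xiter (i : nat) : V -> \bar int := iter i Fop x0.

End Game.

(* Main.v *)
Require Import Defs.
From HB Require Import structures.
From mathcomp Require Import all_boot all_order all_algebra.
From mathcomp Require Import boolp classical_sets constructive_ereal ereal.
Import Order.TTheory GRing.Theory Num.Theory.
Local Open Scope ring_scope.
Local Open Scope ereal_scope.

Lemma Xtarget (V A : finType) (VMin VT : {set V}) (E : {set V * A * V})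
    (omega : V * A * V -> int) (c : V -> int) i t :
  t \in VT -> xiter VMin VT E omega c i t = (c t)%:E.
Proof.
move=> tT; case: i => [|i]; first by rewrite /xiter /= /x0 tT.
by rewrite /xiter iterS /Fop tT.
Qed.

Lemma Fop_mono (V A : finType) (VMin VT : {set V}) (E : {set V * A * V})
    (omega : V * A * V -> int) (c : V -> int) (x y : V -> \bar int) v :
  (forall w, x w <= y w) -> Fop VMin VT E omega c x v <= Fop VMin VT E omega c y v.
Proof.
move=> xy; rewrite /Fop; case: ifP => // _; case: ifP => _.
  by apply: le_bigmin2 => e _; apply: leeD2l.
by apply: le_bigmax2 => e _; apply: leeD2l.
Qed.

Lemma Xmono (V A : finType) (VMin VT : {set V}) (E : {set V * A * V})
    (omega : V * A * V -> int) (c : V -> int) i v :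
  xiter VMin VT E omega c i.+1 v <= xiter VMin VT E omega c i v.
Proof.
elim: i v => [|i IH] v.
  rewrite /xiter /= /x0; case: ifP => vT; last exact: leey.
  by rewrite /Fop vT.
rewrite /xiter iterS [in X in _ <= X]iterS; exact: Fop_mono.
Qed.

Lemma Xmono_le (V A : finType) (VMin VT : {set V}) (E : {set V * A * V})
    (omega : V * A * V -> int) (c : V -> int) i j v : (i <= j)%N ->
  xiter VMin VT E omega c j v <= xiter VMin VT E omega c i v.
Proof.
move=> /subnK <-; elim: (j - i)%N => [|k IH]; first by [].
by rewrite addSn; apply: le_trans IH; apply: Xmono.
Qed.

Lemma Xninf (V A : finType) (VMin VT : {set V}) (E : {set V * A * V})
    (omega : V * A * V -> int) (c : V -> int) i v :
  deadlock_free E -> xiter VMin VT E omega c i v != -oo.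
Proof.
move=> dl; elim: i v => [|i IH] v.
  by rewrite /xiter /= /x0; case: ifP.
rewrite /xiter iterS /Fop; case: ifP => // _.
have fe e : (omega e)%:E + iter i (Fop VMin VT E omega c) (x0 VT c) e.2 != -oo.
  by move: (IH e.2); rewrite /xiter; case: (iter _ _ _ _).
case: ifP => _.
  elim/big_ind: _ => // a b; rewrite -!ltNye => ha hb.
  by rewrite lt_min ha hb.
have [a [w hE]] := dl v.
rewrite (bigD1 (v,a,w)) /=; last by rewrite hE /= eqxx.
by rewrite -ltNye lt_max ltNye fe.
Qed.

Lemma Xstep (V A : finType) (VMin VT : {set V}) (E : {set V * A * V})
    (omega : V * A * V -> int) (c : V -> int) i v :
  deadlock_free E ->
  xiter VMin VT E omega c i.+2 v < xiter VMin VT E omega c i.+1 v ->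
  exists a w, [/\ (v, a, w) \in E, v \notin VT,
    (omega (v, a, w))%:E + xiter VMin VT E omega c i.+1 w
      <= xiter VMin VT E omega c i.+2 v &
    xiter VMin VT E omega c i.+1 w < xiter VMin VT E omega c i w].
Proof.
move=> dl H.
have vT : v \notin VT.
  by apply/negP => vT; move: H; rewrite !Xtarget // ltxx.
have [a0 [w0 hE0]] := dl v.
pose P := (fun e : V * A * V => (e \in E) && (e.1.1 == v)).
have P0 : P (v, a0, w0) by rewrite /P hE0 eqxx.
rewrite /xiter in H *.
set F := Fop VMin VT E omega c in H *.
set y := iter i.+1 F (x0 VT c) in H *.
set z := iter i F (x0 VT c) in H *.
have e2 : iter i.+2 F (x0 VT c) = F y by rewrite iterS.
have e1 : y = F z by rewrite /y iterS.
rewrite e2; rewrite e2 {2}e1 in H.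
case vMin : (v \in VMin).
  have hy : F y v = \big[Order.min/+oo]_(e | P e) ((omega e)%:E + y e.2).
    by rewrite /F /Fop (negbTE vT) vMin.
  have hz : F z v = \big[Order.min/+oo]_(e | P e) ((omega e)%:E + z e.2).
    by rewrite /F /Fop (negbTE vT) vMin.
  have [e0 Pe0 heq] := eq_bigmin (x := +oo) (v, a0, w0) P (fun e => (omega e)%:E + y e.2) P0
    (fun e _ => leey _).
  rewrite hy heq; rewrite hy hz heq in H.
  have H2 := bigmin_le_cond (+oo) (fun e => (omega e)%:E + z e.2) Pe0.
  case: e0 Pe0 heq H H2 => [[v' a] w]; rewrite /P ?inE /= => /andP[hE /eqP ev] heq H H2.
  simpl in ev; subst v'; exists a, w; split => //.
  by rewrite -(lteD2lE (x := (omega (v, a, w))%:E)) // (lt_le_trans H H2).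
have hy : F y v = \big[Order.max/-oo]_(e | P e) ((omega e)%:E + y e.2).
  by rewrite /F /Fop (negbTE vT) vMin.
have hz : F z v = \big[Order.max/-oo]_(e | P e) ((omega e)%:E + z e.2).
  by rewrite /F /Fop (negbTE vT) vMin.
have [e0 Pe0 heq] := eq_bigmax (x := -oo) (v, a0, w0) P (fun e => (omega e)%:E + z e.2) P0
    (fun e _ => leNye _).
rewrite hy; rewrite hy hz heq in H.
have H2 := le_bigmax_cond (-oo) (fun e => (omega e)%:E + y e.2) Pe0.
case: e0 Pe0 heq H H2 => [[v' a] w]; rewrite /P ?inE /= => /andP[hE /eqP ev] heq H H2.
simpl in ev; subst v'; exists a, w; split => //.
by rewrite -(lteD2lE (x := (omega (v, a, w))%:E)) // (le_lt_trans H2 H).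
Qed.

Definition chainf (T : Type) (next : nat -> T -> T) (v0 : T) : nat -> T :=
  fix u j := if j is j'.+1 then next j' (u j') else v0.

Lemma nodecr (V A : finType) (VMin VT : {set V}) (E : {set V * A * V})
    (omega : V * A * V -> int) (c : V -> int) :
  deadlock_free E ->
  (forall (u : V) (es : seq (V * A * V)), is_cycle E u es ->
     all (fun e => e.1.1 \notin VT) es -> (0 < cycle_weight omega es)%R) ->
  forall v0, xiter VMin VT E omega c #|~: VT| v0 <= xiter VMin VT E omega c #|~: VT|.+1 v0.
Proof.
move=> dl poscyc v0.
set n := #|~: VT|.
set X := xiter VMin VT E omega c.
rewrite leNgt; apply/negP => H0.
have [a0 _] := dl v0.
pose cond j (x : V) (p : A * V) :=
  [&& (x, p.1, p.2) \in E,
      (omega (x, p.1, p.2))%:E + X (n - j)%N p.2 <= X (n.+1 - j)%N x &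
      X (n - j)%N p.2 < X (n - j.+1)%N p.2].
pose g (j : nat) (x : V) : option (A * V)%type := [pick p | cond j x p].
pose u := @chainf V (fun j x => (odflt (a0, x) (g j x)).2) v0.
pose ac j := (odflt (a0, u j) (g j (u j))).1.
have uS j : u j.+1 = (odflt (a0, u j) (g j (u j))).2 by [].
have step j : (j < n)%N -> X (n.+1 - j)%N (u j) < X (n - j)%N (u j) ->
    cond j (u j) (ac j, u j.+1) /\ X (n - j)%N (u j.+1) < X (n - j.+1)%N (u j.+1).
  move=> jn H.
  have e1 : (n.+1 - j = (n - j.+1).+2)%N by rewrite subSn ?(ltnW jn) // subnSK.
  have e2 : (n - j = (n - j.+1).+1)%N by rewrite subnSK.
  rewrite e1 e2 in H.
  have [a [w [hE _ h1 h2]]] := @Xstep V A VMin VT E omega c _ _ dl H.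
  rewrite uS /ac /g; case: pickP => [p hp | hn] /=.
    by split => //; move: hp; rewrite /cond => /and3P[].
  by move: (hn (a, w)); rewrite /cond /= hE e1 e2 h1 h2.
have chain j : (j <= n)%N -> X (n.+1 - j)%N (u j) < X (n - j)%N (u j).
  elim: j => [|j IH] jn; first by rewrite !subn0.
  have jn' : (j < n)%N by [].
  by rewrite subSS; case: (step j jn' (IH (ltnW jn'))).
have edge j : (j < n)%N -> cond j (u j) (ac j, u j.+1).
  by move=> jn; case: (step j jn (chain j (ltnW jn))).
have nT j : (j <= n)%N -> u j \notin VT.
  move=> jn; apply/negP => hT; have := chain j jn.
  by rewrite /X !Xtarget // ltxx.
have [a [b [ab [bn eqab]]]] : exists a b, [/\ (a < b)%N, (b <= n)%N & u a = u b].
  have : ~~ injectiveb (fun k : 'I_n.+1 => u k).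
    apply/negP => /injectiveP inj.
    have sub : [set u (nat_of_ord k) | k in 'I_n.+1] \subset ~: VT.
      apply/fintype.subsetP => x /imsetP [k _ ->]; rewrite inE; apply: nT.
      by rewrite -ltnS.
    have := subset_leq_card sub; rewrite card_imset // card_ord.
    by rewrite -/n ltnn.
  case/injectivePn => k1 [k2 hne heq].
  case: (ltngtP k1 k2) => h.
  - by exists k1, k2; split => //; rewrite -ltnS.
  - by exists k2, k1; split => //; rewrite -ltnS.
  - by move: hne; rewrite -(inj_eq val_inj) /= h eqxx.
pose mk j := (u j, ac j, u j.+1).
have hist len x : (x + len <= n)%N -> is_hist E (u x) [seq mk j | j <- iota x len].
  elim: len x => [|len IH] x //= h.
  have xn : (x < n)%N by apply: leq_trans h; rewrite -addn1 leq_add2l.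
  have /and3P [hE _ _] := edge x xn.
  rewrite hE eqxx /=; apply: IH; by rewrite addSnnS.
have hl len x : hlast (u x) [seq mk j | j <- iota x len] = u (x + len)%N.
  elim: len x => [|len IH] x /=; first by rewrite addn0.
  by have := IH x.+1; rewrite /hlast /= => ->; rewrite addnS.
have wt len x : (x + len <= n)%N ->
    (\sum_(e <- [seq mk j | j <- iota x len]) omega e)%:E + X (n.+1 - (x + len))%N (u (x + len)%N)
      <= X (n.+1 - x)%N (u x).
  elim: len x => [|len IH] x h; first by rewrite big_nil add0e addn0.
  have xn : (x < n)%N by apply: leq_trans h; rewrite -addn1 leq_add2l.
  have /and3P [_ h1 _] := edge x xn.
  rewrite /= big_cons EFinD -addeA; apply: le_trans h1.
  apply: leeD2l; have := IH x.+1; rewrite -addSnnS subSS; apply.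
  by rewrite addSnnS.
have ba : (a + (b - a) = b)%N by rewrite subnKC // ltnW.
pose es := [seq mk j | j <- iota a (b - a)].
have cyc : is_cycle E (u a) es.
  apply/and3P; split.
  - by rewrite -size_eq0 size_map size_iota subn_eq0 -ltnNge ab.
  - by apply: hist; rewrite ba.
  - by rewrite hl ba eqab.
have allnt : all (fun e => e.1.1 \notin VT) es.
  apply/allP => e /mapP [j hj ->] /=; apply: nT.
  move: hj; rewrite mem_iota ba => /andP [_ jb].
  exact: leq_trans (ltnW jb) bn.
have pos := poscyc _ _ cyc allnt.
have W := wt (b - a)%N a; rewrite ba in W; have {W} W := W bn.
rewrite eqab in W.
have M : X (n.+1 - a)%N (u b) <= X (n.+1 - b)%N (u b).
  by apply: Xmono_le; apply: leq_sub2l; apply: ltnW.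
have hq1 := chain b bn.
have hq2 : X (n.+1 - b)%N (u b) != -oo by apply: Xninf.
have := le_trans W M; move: hq1 hq2.
move: (X (n.+1 - b)%N (u b)) => q.
rewrite /cycle_weight -/es.
case: q => [r| |] //=.
  move=> _ _; rewrite -EFinD lee_fin gerDr leNgt pos //.
by move=> h; move: (lt_le_trans h (leey _)); rewrite ltxx.
Qed.

Theorem proposition2 (V A : finType) (VMin VT : {set V}) (E : {set V * A * V})
    (omega : V * A * V -> int) (c : V -> int) :
  VT \subset VMin ->
  deadlock_free E ->
  deterministic E ->
  strongly_connected_induced E (~: VT) ->
  (forall (u : V) (es : seq (V * A * V)), is_cycle E u es ->
     all (fun e => e.1.1 \notin VT) es -> (0 < cycle_weight omega es)%R) ->
  (forall v : V, game_value VMin VT E omega c v != +oo) ->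
  let n := #|~: VT| in
  forall (k : nat) (v : V),
    xiter VMin VT E omega c (n + k) v = xiter VMin VT E omega c n v.
Proof.
move=> _ dl _ _ poscyc _ n.
have fix1 : xiter VMin VT E omega c n.+1 = xiter VMin VT E omega c n.
  apply: funext => v; apply: le_anti; rewrite Xmono /=.
  exact: (@nodecr V A VMin VT E omega c dl poscyc v).
elim=> [|k IH] v; first by rewrite addn0.
have IHf : xiter VMin VT E omega c (n + k) = xiter VMin VT E omega c n.
  by apply: funext => w; apply: IH.
rewrite addnS /xiter iterS; rewrite /xiter in IHf fix1.
by rewrite IHf -iterS fix1.
Qed.
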